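(* Let $W$ be a real symmetric $n\times n$ matrix with non-negative entries $w_{i,j}$ and zero diagonal, let $\lambda\ge 0$, and let $z\in\mathbb{C}^n$. If $$\lambda\,\Bigl(\max_{i}\sum_{j\neq i} w_{i,j}\Bigr) < 1,$$ then the function $x\mapsto D_{\lambda,W}(x;z)$ is strictly convex on $\mathbb{C}^n$ (viewed as $\mathbb{R}^{2n}$). In particular, it has a unique minimizer.
   Context: For $x\in\mathbb{C}^n$, $|x|$ denotes the vector of magnitudes $(|x_1|,\dots,|x_n|)$ and $\|x\|_1=\sum_i |x_i|$. The penalty is $P_W(x)=\|x\|_1+\frac12\sum_{i,j} w_{i,j}|x_i x_j| = \|x\|_1+\frac12|x|^T W|x|$. For $\lambda\ge0$ and $z\in\mathbb{C}^n$, $D_{\lambda,W}(x;z)=\frac12\|z-x\|_2^2+\lambda P_W(x)$. $\mathbb{C}^n$ is identified with $\mathbb{R}^{2n}$, with inner product $\langle x,y\rangle=\sum_i \mathrm{Re}(x_i \overline{y_i})$. *)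

(* Defs.v *)
From Stdlib Require Import Reals.
From mathcomp Require Import all_boot.
Set Implicit Arguments.
Unset Strict Implicit.
Open Scope R_scope.

(* A complex number is represented by its (real part, imaginary part);
   C^n is identified with R^(2n) via these coordinates. *)
Definition cvec (n : nat) := 'I_n -> (R * R)%type.

Definition cmod (z : (R * R)%type) : R := sqrt (fst z * fst z + snd z * snd z).

Definition rsum (n : nat) (f : 'I_n -> R) : R := \big[Rplus/0]_(i < n) f i.

Definition norm1 (n : nat) (x : cvec n) : R := rsum (fun i => cmod (x i)).

Definition PW (n : nat) (W : 'I_n -> 'I_n -> R) (x : cvec n) : R :=
  norm1 x + / 2 * rsum (fun i => rsum (fun j => W i j * (cmod (x i) * cmod (x j)))).

Definition dist2 (n : nat) (z x : cvec n) : R :=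
  rsum (fun i => (fst (z i) - fst (x i)) ^ 2 + (snd (z i) - snd (x i)) ^ 2).

Definition D (n : nat) (lam : R) (W : 'I_n -> 'I_n -> R) (x z : cvec n) : R :=
  / 2 * dist2 z x + lam * PW W x.

Definition cvcomb (n : nat) (t : R) (x y : cvec n) : cvec n :=
  fun i => (t * fst (x i) + (1 - t) * fst (y i), t * snd (x i) + (1 - t) * snd (y i)).

Definition strictly_convex (n : nat) (f : cvec n -> R) : Prop :=
  forall (x y : cvec n) (t : R), x <> y -> 0 < t < 1 ->
    f (cvcomb t x y) < t * f x + (1 - t) * f y.

Definition is_minimizer (n : nat) (f : cvec n -> R) (x : cvec n) : Prop :=
  forall y : cvec n, f x <= f y.

(* max_i sum_{j <> i} w_{i,j}  (0 for n = 0; entries are nonnegative) *)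
Definition max_offdiag_rowsum (n : nat) (W : 'I_n -> 'I_n -> R) : R :=
  \big[Rmax/0]_(i < n) (\big[Rplus/0]_(j < n | j != i) W i j).

(* Main.v *)
Set Warnings "-notation-overridden".
Require Import Defs.
Set Implicit Arguments. Unset Strict Implicit.
From HB Require Import structures.
From Stdlib Require Import Reals Lra Psatz Classical ClassicalEpsilon FunctionalExtensionality.
From mathcomp Require Import all_boot.
Open Scope R_scope.

Lemma RplusA : associative Rplus. Proof. move=> a b c; ring. Qed.
HB.instance Definition _ := Monoid.isComLaw.Build R 0 Rplus RplusA Rplus_comm Rplus_0_l.

Lemma rsum_plus n (f g : 'I_n -> R) : rsum (fun i => f i + g i) = rsum f + rsum g.
Proof. rewrite /rsum big_split //. Qed.

Lemma rsum_scal n c (f : 'I_n -> R) : rsum (fun i => c * f i) = c * rsum f.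
Proof. rewrite /rsum. apply: (big_rec2 (fun a b => a = c * b)); first by ring.
move=> i a b _ ->; ring. Qed.

Lemma rsum_le n (f g : 'I_n -> R) : (forall i, f i <= g i) -> rsum f <= rsum g.
Proof. move=> H; rewrite /rsum. apply: (big_rec2 (fun a b => a <= b)); first lra.
move=> i a b _ Hab; have := H i; lra. Qed.

Lemma rsum_ge0 n (f : 'I_n -> R) : (forall i, 0 <= f i) -> 0 <= rsum f.
Proof. move=> H; rewrite /rsum. apply: (big_rec (fun a => 0 <= a)); first lra.
move=> i a _ Ha; have := H i; lra. Qed.

Lemma rsum_term n (f : 'I_n -> R) i : (forall j, 0 <= f j) -> f i <= rsum f.
Proof. move=> H; rewrite /rsum (bigD1 i) //=.
have : 0 <= \big[Rplus/0]_(j < n | j != i) f j.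
  apply: (big_rec (fun a => 0 <= a)); first lra. move=> j a _ Ha; have := H j; lra.
move=> Hs; rewrite -{1}[f i]Rplus_0_r; apply: Rplus_le_compat_l; exact: Hs. Qed.

Lemma rsum_exch n (F : 'I_n -> 'I_n -> R) : rsum (fun i => rsum (fun j => F i j)) = rsum (fun j => rsum (fun i => F i j)).
Proof. rewrite /rsum; apply: exchange_big. Qed.

Lemma rmax_ge n (g : 'I_n -> R) i : g i <= \big[Rmax/0]_(k < n) g k.
Proof.
have : i \in index_enum 'I_n by rewrite mem_index_enum.
elim: (index_enum 'I_n) => [|a s IH] //=.
rewrite inE big_cons => /orP [/eqP <-|Hs]; first by apply Rmax_l.
apply: Rle_trans (IH Hs) _; apply Rmax_r.
Qed.
Lemma rsum_ext n (f g : 'I_n -> R) : (forall i, f i = g i) -> rsum f = rsum g.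
Proof. move=> H; rewrite /rsum; apply: eq_bigr => i _; exact: H. Qed.

Lemma rsum_lin3 n a b (f g h : 'I_n -> R) :
  rsum (fun i => a * f i + b * g i - h i) = a * rsum f + b * rsum g - rsum h.
Proof.
rewrite /Rminus -!rsum_scal. have -> : - rsum h = rsum (fun i => -1 * h i) by rewrite rsum_scal; ring.
rewrite -!rsum_plus. apply: rsum_ext => i; ring. Qed.

Lemma cmod_ge0 u : 0 <= cmod u.
Proof. apply: sqrt_pos. Qed.

Lemma cmod_sq u : cmod u * cmod u = fst u * fst u + snd u * snd u.
Proof. rewrite /cmod sqrt_sqrt //; nra. Qed.

Lemma dot_le u v : fst u * fst v + snd u * snd v <= cmod u * cmod v.
Proof.
have h1 := cmod_sq u; have h2 := cmod_sq v; have h3 := cmod_ge0 u; have h4 := cmod_ge0 v.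
set a := cmod u in h1 h3 *; set c := cmod v in h2 h4 *.
have hac : 0 <= a * c by nra.
have key : (fst u * fst v + snd u * snd v)^2 <= (a*c)^2.
  have -> : (a*c)^2 = (a*a)*(c*c) by ring. rewrite h1 h2.
  have := pow2_ge_0 (fst u * snd v - snd u * fst v). nra.
nra. Qed.

Lemma cmod_comb t u v : 0 <= t <= 1 ->
  cmod (t * fst u + (1 - t) * fst v, t * snd u + (1 - t) * snd v) <= t * cmod u + (1 - t) * cmod v.
Proof.
move=> Ht. set w := (_, _).
have hw := cmod_sq w; have hw0 := cmod_ge0 w.
have h1 := cmod_sq u; have h2 := cmod_sq v; have h3 := cmod_ge0 u; have h4 := cmod_ge0 v.
have hd := dot_le u v. rewrite /w /= in hw.
have hR : 0 <= t * cmod u + (1 - t) * cmod v by nra.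
have ht1 : 0 <= t * (1 - t) by nra.
have key : cmod w * cmod w <= (t * cmod u + (1 - t) * cmod v) * (t * cmod u + (1 - t) * cmod v).
  rewrite hw. have -> : (t * cmod u + (1 - t) * cmod v) * (t * cmod u + (1 - t) * cmod v)
   = t*t*(cmod u * cmod u) + (1-t)*(1-t)*(cmod v * cmod v) + 2*(t*(1-t))*(cmod u * cmod v) by ring.
  rewrite h1 h2. nra.
nra. Qed.

Lemma cmod_diff u v : (cmod u - cmod v)^2 <= (fst u - fst v)^2 + (snd u - snd v)^2.
Proof.
have h1 := cmod_sq u; have h2 := cmod_sq v; have hd := dot_le u v. nra. Qed.

Lemma pair_ineq t a b c e p q Di Dj : 0 <= t <= 1 -> 0 <= a -> 0 <= b -> 0 <= c -> 0 <= e ->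
  0 <= p -> 0 <= q -> p <= t * a + (1 - t) * c -> q <= t * b + (1 - t) * e ->
  (a - c)^2 <= Di -> (b - e)^2 <= Dj ->
  - (t * (1 - t)) * ((Di + Dj) / 2) <= t * (a * b) + (1 - t) * (c * e) - p * q.
Proof.
move=> Ht ha hb hc he hp hq Hp Hq HDi HDj.
have hpq : p * q <= (t * a + (1 - t) * c) * (t * b + (1 - t) * e).
  apply: Rmult_le_compat => //.
have ht1 : 0 <= t * (1 - t) by nra.
have hab : - ((a - c)^2 + (b - e)^2) / 2 <= (a - c) * (b - e).
  have := pow2_ge_0 (a - c + (b - e)). nra.
have : (t * a + (1 - t) * c) * (t * b + (1 - t) * e) = t * (a*b) + (1-t)*(c*e) - t*(1-t)*((a-c)*(b-e)) by ring.
nra. Qed.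
Definition dd n (x y : cvec n) i := (fst (x i) - fst (y i))^2 + (snd (x i) - snd (y i))^2.

Arguments dd {n}.
Lemma dd_ge0 n (x y : cvec n) i : 0 <= dd x y i.
Proof. rewrite /dd; have := pow2_ge_0 (fst (x i) - fst (y i)); have := pow2_ge_0 (snd (x i) - snd (y i)); lra. Qed.

Lemma dist2_gap n t (z x y : cvec n) :
 t * dist2 z x + (1-t) * dist2 z y - dist2 z (cvcomb t x y) = t*(1-t) * dist2 x y.
Proof. rewrite /dist2 -rsum_lin3 -rsum_scal; apply rsum_ext => i; rewrite /cvcomb /=; ring. Qed.

Lemma norm1_comb n t (x y : cvec n) : 0 <= t <= 1 ->
  norm1 (cvcomb t x y) <= t * norm1 x + (1-t) * norm1 y.
Proof. move=> Ht; rewrite /norm1 -!rsum_scal -rsum_plus; apply rsum_le => i; exact: cmod_comb. Qed.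

Definition Sq n (W : 'I_n -> 'I_n -> R) (x : cvec n) :=
  rsum (fun i => rsum (fun j => W i j * (cmod (x i) * cmod (x j)))).

Arguments Sq {n}.
Lemma quad_gap n (W : 'I_n -> 'I_n -> R) r t (x y : cvec n) :
  (forall i j, 0 <= W i j) -> (forall i j, W i j = W j i) ->
  (forall i, rsum (W i) <= r) -> 0 <= t <= 1 ->
  - (t*(1-t)) * (r * dist2 x y) <= t * Sq W x + (1-t) * Sq W y - Sq W (cvcomb t x y).
Proof.
move=> HW Hs Hr Ht.
have -> : t * Sq W x + (1-t) * Sq W y - Sq W (cvcomb t x y) =
  rsum (fun i => rsum (fun j => W i j * (t * (cmod (x i) * cmod (x j)) + (1-t) * (cmod (y i) * cmod (y j))
      - cmod (cvcomb t x y i) * cmod (cvcomb t x y j)))).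
  rewrite /Sq -rsum_lin3; apply rsum_ext => i; rewrite -rsum_lin3; apply rsum_ext => j; ring.
have step2 : rsum (fun i => rsum (fun j => W i j * (- (t * (1 - t)) * ((dd x y i + dd x y j) / 2))))
  <= rsum (fun i => rsum (fun j => W i j * (t * (cmod (x i) * cmod (x j)) + (1-t) * (cmod (y i) * cmod (y j))
      - cmod (cvcomb t x y i) * cmod (cvcomb t x y j)))).
  apply rsum_le => i; apply rsum_le => j; apply Rmult_le_compat_l => //.
  apply: pair_ineq => //; try apply cmod_ge0; try apply cmod_comb => //; apply cmod_diff.
apply: Rle_trans step2.
have -> : rsum (fun i => rsum (fun j => W i j * (- (t * (1 - t)) * ((dd x y i + dd x y j) / 2))))
  = - (t * (1 - t)) / 2 * (rsum (fun i => dd x y i * rsum (W i)) + rsum (fun i => rsum (fun j => W i j * dd x y j))).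
  rewrite -rsum_plus -rsum_scal; apply rsum_ext => i.
  rewrite -rsum_scal -rsum_plus -rsum_scal; apply rsum_ext => j; rewrite /=; field.
have -> : rsum (fun i => rsum (fun j => W i j * dd x y j)) = rsum (fun i => dd x y i * rsum (W i)).
  rewrite rsum_exch; apply rsum_ext => j; rewrite -rsum_scal; apply rsum_ext => i; rewrite Hs; ring.
have hb : rsum (fun i => dd x y i * rsum (W i)) <= r * dist2 x y.
  rewrite /dist2 -rsum_scal; apply rsum_le => i.
  have := @dd_ge0 _ x y i; have := Hr i.
  move=> h1 h2; rewrite /dd in h2 *; nra.
have ht1 : 0 <= t * (1 - t) by nra.
nra.
Qed.
Lemma PW_eq n (W : 'I_n -> 'I_n -> R) x : PW W x = norm1 x + / 2 * Sq W x.
Proof. by []. Qed.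

Lemma PW_gap n (W : 'I_n -> 'I_n -> R) r t (x y : cvec n) :
  (forall i j, 0 <= W i j) -> (forall i j, W i j = W j i) ->
  (forall i, rsum (W i) <= r) -> 0 <= t <= 1 ->
  PW W (cvcomb t x y) <= t * PW W x + (1-t) * PW W y + t*(1-t) * (r / 2 * dist2 x y).
Proof.
move=> HW Hs Hr Ht; rewrite !PW_eq.
have := norm1_comb x y Ht. have := quad_gap x y HW Hs Hr Ht. move=> h1 h2. nra. Qed.

Lemma SC n (W : 'I_n -> 'I_n -> R) lam r t (x y z : cvec n) :
  (forall i j, 0 <= W i j) -> (forall i j, W i j = W j i) ->
  (forall i, rsum (W i) <= r) -> 0 <= lam -> 0 <= t <= 1 ->
  D lam W (cvcomb t x y) z <= t * D lam W x z + (1-t) * D lam W y z - t*(1-t)*((1 - lam*r)/2) * dist2 x y.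
Proof.
move=> HW Hs Hr Hl Ht; rewrite /D.
have h1 := dist2_gap t z x y.
have h2 := PW_gap x y HW Hs Hr Ht.
have h3 := Rmult_le_compat_l lam _ _ Hl h2.
have : t * (/ 2 * dist2 z x + lam * PW W x) + (1 - t) * (/ 2 * dist2 z y + lam * PW W y) -
   t * (1 - t) * ((1 - lam * r) / 2) * dist2 x y
   = / 2 * (t * dist2 z x + (1-t) * dist2 z y - t * (1-t) * dist2 x y)
     + lam * (t * PW W x + (1 - t) * PW W y + t * (1 - t) * (r / 2 * dist2 x y)) by field.
move=> ->. nra. Qed.

Lemma rowsum_le n (W : 'I_n -> 'I_n -> R) : (forall i, W i i = 0) ->
  forall i, rsum (W i) <= max_offdiag_rowsum W.
Proof.
move=> Hd i. rewrite /rsum (bigD1 i) //= Hd Rplus_0_l.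
exact: (rmax_ge (fun i => \big[Rplus/0]_(j < n | j != i) W i j) i).
Qed.

Lemma dist2_ge0 n (x y : cvec n) : 0 <= dist2 x y.
Proof. apply rsum_ge0 => i; exact: dd_ge0. Qed.

Lemma dist2_pos n (x y : cvec n) : x <> y -> 0 < dist2 x y.
Proof.
move=> Hxy.
have [i Hi] : exists i, x i <> y i.
  apply: NNPP => H; apply: Hxy; apply: functional_extensionality => i.
  apply: NNPP => H'; apply: H; by exists i.
have : 0 < dd x y i.
  rewrite /dd. case E1: (x i) => [a b]; case E2: (y i) => [c d] /=.
  rewrite E1 E2 in Hi.
  have : a <> c \/ b <> d.
    apply: NNPP => H; apply: Hi; f_equal; apply: NNPP => H'; apply: H; tauto.
  case=> H.
  - have := Rsqr_pos_lt (a - c) ltac:(lra); rewrite /Rsqr; have := pow2_ge_0 (b - d); move=> *; nra.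
  - have := Rsqr_pos_lt (b - d) ltac:(lra); rewrite /Rsqr; have := pow2_ge_0 (a - c); move=> *; nra.
have := rsum_term i (@dd_ge0 _ x y). rewrite /dist2. move=> h1 h2.
have -> : rsum (fun i => (fst (x i) - fst (y i)) ^ 2 + (snd (x i) - snd (y i)) ^ 2) = rsum (dd x y) by [].
lra. Qed.
Lemma cv_ext (u v : nat -> R) l l' : Un_cv u l -> (forall k, u k = v k) -> l = l' -> Un_cv v l'.
Proof. move=> H E <- eps He; have [N HN] := H eps He; exists N => k Hk; rewrite -E; exact: HN. Qed.

Lemma cv_const c : Un_cv (fun _ => c) c.
Proof. move=> eps He; exists 0%nat => k _; rewrite /Rdist Rminus_diag Rabs_R0; lra. Qed.

Lemma rsum_cv n (F : nat -> 'I_n -> R) (l : 'I_n -> R) :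
  (forall i, Un_cv (fun k => F k i) (l i)) -> Un_cv (fun k => rsum (F k)) (rsum l).
Proof.
elim: n F l => [|n IH] F l H.
  apply: cv_ext (cv_const 0) _ _ => [k|]; by rewrite /rsum big_ord0.
have H1 := IH (fun k i => F k (widen_ord (leqnSn n) i)) (fun i => l (widen_ord (leqnSn n) i)) (fun i => H _).
have H2 := CV_plus _ _ _ _ H1 (H ord_max).
apply: cv_ext H2 _ _ => [k|]; by rewrite /rsum big_ord_recr.
Qed.

Lemma cmod_cv (u : nat -> R * R) (a : R * R) :
  Un_cv (fun k => fst (u k)) (fst a) -> Un_cv (fun k => snd (u k)) (snd a) ->
  Un_cv (fun k => cmod (u k)) (cmod a).
Proof.
move=> H1 H2. rewrite /cmod.
have H := CV_plus _ _ _ _ (CV_mult _ _ _ _ H1 H1) (CV_mult _ _ _ _ H2 H2).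
apply: (continuity_seq sqrt _ _ (continuity_pt_sqrt _ _) H). nra.
Qed.

Lemma sq_cv (u : nat -> R) a : Un_cv u a -> Un_cv (fun k => u k ^ 2) (a ^ 2).
Proof. move=> H; apply: cv_ext (CV_mult _ _ _ _ H H) _ _ => [k|]; ring. Qed.

Lemma D_cv n lam (W : 'I_n -> 'I_n -> R) (z : cvec n) (xs : nat -> cvec n) (xb : cvec n) :
  (forall i, Un_cv (fun k => fst (xs k i)) (fst (xb i))) ->
  (forall i, Un_cv (fun k => snd (xs k i)) (snd (xb i))) ->
  Un_cv (fun k => D lam W (xs k) z) (D lam W xb z).
Proof.
move=> H1 H2.
have Hc : forall i, Un_cv (fun k => cmod (xs k i)) (cmod (xb i)) by move=> i; apply: cmod_cv.
have Hd : Un_cv (fun k => dist2 z (xs k)) (dist2 z xb).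
  apply: rsum_cv => i. apply: CV_plus; apply: sq_cv; apply: CV_minus => //; apply: cv_const.
have Hn : Un_cv (fun k => norm1 (xs k)) (norm1 xb) by apply: rsum_cv.
have Hq : Un_cv (fun k => Sq W (xs k)) (Sq W xb).
  apply: rsum_cv => i; apply: rsum_cv => j; apply: CV_mult; first exact: cv_const.
  exact: CV_mult.
rewrite /D. apply: CV_plus; apply: CV_mult; try exact: cv_const; first done.
rewrite /PW. apply: CV_plus => //. apply: CV_mult => //; exact: cv_const.
Qed.
Lemma D_ge0 n lam (W : 'I_n -> 'I_n -> R) (x z : cvec n) :
  (forall i j, 0 <= W i j) -> 0 <= lam -> 0 <= D lam W x z.
Proof.
move=> HW Hl. rewrite /D PW_eq.
have h1 := dist2_ge0 z x.
have h2 : 0 <= norm1 x by apply: rsum_ge0 => i; exact: cmod_ge0.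
have h3 : 0 <= Sq W x.
  apply: rsum_ge0 => i; apply: rsum_ge0 => j.
  have := cmod_ge0 (x i); have := cmod_ge0 (x j); have := HW i j; move=> *.
  apply: Rmult_le_pos => //; exact: Rmult_le_pos.
have : 0 <= norm1 x + / 2 * Sq W x by lra.
move=> h4. have := Rmult_le_pos _ _ Hl h4. lra.
Qed.

Lemma coord_le n (a b : cvec n) i :
  (fst (a i) - fst (b i))^2 <= dist2 a b /\ (snd (a i) - snd (b i))^2 <= dist2 a b.
Proof.
have := rsum_term i (@dd_ge0 _ a b).
have -> : rsum (dd a b) = dist2 a b by [].
rewrite /dd. have := pow2_ge_0 (fst (a i) - fst (b i)); have := pow2_ge_0 (snd (a i) - snd (b i)).
move=> *; lra.
Qed.

Lemma sq_abs_lt x e : 0 < e -> x^2 < e^2 -> Rabs x < e.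
Proof. move=> He Hx; apply: Rabs_def1; nra. Qed.

Theorem proposition1 (n : nat) (W : 'I_n -> 'I_n -> R) (lam : R) (z : cvec n)
  (HWsym : forall i j, W i j = W j i)
  (HWnn : forall i j, 0 <= W i j)
  (HWdiag : forall i, W i i = 0)
  (Hlam : 0 <= lam)
  (Hcond : lam * max_offdiag_rowsum W < 1) :
  strictly_convex (fun x => D lam W x z) /\
  (exists x : cvec n, is_minimizer (fun y => D lam W y z) x /\
     forall y : cvec n, is_minimizer (fun y => D lam W y z) y -> y = x).
Proof.
set r := max_offdiag_rowsum W.
have Hr : forall i, rsum (W i) <= r := rowsum_le HWdiag.
set f := fun x => D lam W x z.
set kap := (1 - lam * r) / 2.
have Hk : 0 < kap by rewrite /kap /r; lra.
have SCf : forall t x y, 0 <= t <= 1 ->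
   f (cvcomb t x y) <= t * f x + (1 - t) * f y - t * (1 - t) * kap * dist2 x y.
  move=> t x y Ht; exact: SC.
have Hstrict : strictly_convex f.
  move=> x y t Hxy Ht. have := SCf t x y ltac:(lra). have := dist2_pos Hxy.
  have : 0 < t * (1 - t) by nra. move=> h1 h2 h3.
  have : 0 < t * (1 - t) * kap * dist2 x y by apply: Rmult_lt_0_compat => //; apply: Rmult_lt_0_compat.
  lra.
split; first exact: Hstrict.
set E := fun v => exists x, v = - f x.
have [L [HL1 HL2]] : {L | is_lub E L}.
  apply: completeness.
  - exists 0 => v [x ->]. have := D_ge0 x z HWnn Hlam. rewrite /f; lra.
  - by exists (- f (fun _ => (0, 0))); exists (fun _ => (0, 0)).
set mu := - L.
have Hmu : forall x, mu <= f x.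
  move=> x. have := HL1 (- f x) (ex_intro _ x erefl). rewrite /mu; lra.
have Happ : forall e, 0 < e -> exists x, f x < mu + e.
  move=> e He. apply: NNPP => Hn.
  have : L <= L - e; last lra.
  apply: HL2 => v [x ->].
  have : ~ f x < mu + e by move=> h; apply: Hn; exists x.
  rewrite /mu; lra.
have Hseq : forall k : nat, exists x, f x < mu + / (INR k + 1).
  move=> k; apply: Happ. apply: Rinv_0_lt_compat. have := pos_INR k; lra.
set xs := fun k => proj1_sig (constructive_indefinite_description _ (Hseq k)).
have Hxs : forall k, f (xs k) < mu + / (INR k + 1).
  move=> k; exact: (proj2_sig (constructive_indefinite_description _ (Hseq k))).
have Hkey : forall e a b, f a < mu + e -> f b < mu + e -> kap * dist2 a b < 4 * e.
  move=> e a b Ha Hb. have := SCf (/2) a b ltac:(lra). have := Hmu (cvcomb (/2) a b).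
  move=> h1 h2; lra.
have Hcau : forall eps, 0 < eps -> exists N : nat, forall k l : nat, (N <= k)%coq_nat -> (N <= l)%coq_nat ->
   dist2 (xs k) (xs l) < eps ^ 2.
  move=> eps He.
  have Hp : 0 < kap * eps ^ 2 / 4.
    have : 0 < eps ^ 2 by nra. move=> h; apply: Rmult_lt_0_compat; [nra|lra].
  have [N [HN HN0]] := archimed_cor1 _ Hp.
  exists N => k l Hk0 Hl0.
  have bnd : forall m, (N <= m)%coq_nat -> f (xs m) < mu + kap * eps ^ 2 / 4.
    move=> m Hm. have := Hxs m.
    have : / (INR m + 1) <= / INR N.
      apply: Rinv_le_contravar. apply: lt_0_INR; assumption.
      have := le_INR _ _ Hm; lra.
    lra.
  have := Hkey _ _ _ (bnd k Hk0) (bnd l Hl0).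
  move=> h. have : kap * dist2 (xs k) (xs l) < kap * eps ^ 2 by lra.
  move=> h'. exact: (Rmult_lt_reg_l _ _ _ Hk h').
have C1 : forall i, Cauchy_crit (fun k => fst (xs k i)).
  move=> i eps He. have [N HN] := Hcau eps He. exists N => k l Hk0 Hl0.
  rewrite /Rdist; apply: sq_abs_lt => //.
  have := coord_le (xs k) (xs l) i. have := HN k l Hk0 Hl0. move=> *; lra.
have C2 : forall i, Cauchy_crit (fun k => snd (xs k i)).
  move=> i eps He. have [N HN] := Hcau eps He. exists N => k l Hk0 Hl0.
  rewrite /Rdist; apply: sq_abs_lt => //.
  have := coord_le (xs k) (xs l) i. have := HN k l Hk0 Hl0. move=> *; lra.
set xb : cvec n := fun i => (proj1_sig (R_complete _ (C1 i)), proj1_sig (R_complete _ (C2 i))).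
have Hcv : Un_cv (fun k => f (xs k)) (f xb).
  apply: D_cv => i /=.
  - exact: (proj2_sig (R_complete _ (C1 i))).
  - exact: (proj2_sig (R_complete _ (C2 i))).
have Hmin : f xb <= mu.
  apply: Rnot_lt_le => Hlt.
  set d := f xb - mu.
  have Hd : 0 < d / 2 by rewrite /d; lra.
  have [K1 HK1] := Hcv _ Hd.
  have [K2 [HK2 HK20]] := archimed_cor1 _ Hd.
  have := HK1 (K1 + K2)%nat (Nat.le_add_r K1 K2). have := Hxs (K1 + K2)%nat.
  have : / (INR (K1 + K2) + 1) <= / INR K2.
    apply: Rinv_le_contravar. apply: lt_0_INR; assumption.
    have := le_INR K2 (K1 + K2) (Nat.le_add_l K2 K1); lra.
  rewrite /Rdist. move=> h1 h2 h3.
  have := Rle_abs (f (xs (K1 + K2)%nat) - f xb). have := Rabs_Ropp (f (xs (K1 + K2)%nat) - f xb).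
  have := Rle_abs (- (f (xs (K1 + K2)%nat) - f xb)). rewrite /d in HK2 h3 *. lra.
exists xb; split.
  move=> y; have := Hmu y; rewrite /f in Hmin *; lra.
move=> y Hy. apply: NNPP => Hne.
have hxy : f y <= f xb := Hy xb.
have hm := Hmu (cvcomb (/2) y xb).
have := Hstrict y xb (/2) Hne ltac:(lra).
rewrite /f in hm hxy Hmin *. lra.
Qed.
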